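(* Let $r\ge1$ and $\mu\in\mathcal P_r$. (i) If $\mu\in\mathcal P_s$ for some $s>r$, then $\lim_{n\to\infty}n^{1/r-1/s}d_r(\delta^{\mathbf u_n}_\bullet,\mu)=0$. (ii) If ${\rm supp}\,\mu$ is bounded, then $\limsup_{n\to\infty}n^{1/r}d_r(\delta^{\mathbf u_n}_\bullet,\mu)<+\infty$.
   Context: $\mathcal P$ denotes the set of Borel probability measures on $\mathbb R$; $\mathcal P_r=\{\mu\in\mathcal P:\int|x|^r{\rm d}\mu(x)<\infty\}$. For $\mu\in\mathcal P$, $F_\mu(x)=\mu(]-\infty,x])$ and $F_\mu^{-1}(t)=\sup\{x: F_\mu(x)\le t\}$, $t\in]0,1[$. $d_r(\mu,\nu)=\big(\int_0^1|F_\mu^{-1}(t)-F_\nu^{-1}(t)|^r{\rm d}t\big)^{1/r}$ on $\mathcal P_r$. With $\Xi_n=\{\mathbf x\in\mathbb R^n:x_1\le\dots\le x_n\}$ and $\delta^{\mathbf u_n}_{\mathbf x}=\frac1n\sum_{i=1}^n\delta_{x_i}$, set $d_r(\delta^{\mathbf u_n}_\bullet,\mu)=\min_{\mathbf x\in\Xi_n}d_r(\delta^{\mathbf u_n}_{\mathbf x},\mu)$ (the minimum is attained). *)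

(* Defs.v *)
From Stdlib Require Import Reals Lra List Sorted ClassicalEpsilon.
Open Scope R_scope.

(* Supremum of a set of reals (junk value 0 if empty or unbounded). *)
Definition Rsup (E : R -> Prop) : R :=
  match excluded_middle_informative (bound E /\ exists x, E x) with
  | left H => proj1_sig (completeness E (proj1 H) (proj2 H))
  | right _ => 0
  end.

(* Infimum (junk value 0 if empty or unbounded below). *)
Definition Rinf (E : R -> Prop) : R := - Rsup (fun y => E (- y)).

(* Power with 0^r = 0 (Stdlib's Rpower gives Rpower 0 r = 1). *)
Definition rpow (x r : R) : R := if Rle_dec x 0 then 0 else Rpower x r.

(* A Borel probability measure mu on R, represented by its distribution
   function F_mu(x) = mu(]-oo,x]). *)
Definition is_cdf (F : R -> R) : Prop :=
  (forall x y, x <= y -> F x <= F y) /\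
  (forall x eps, 0 < eps -> exists delta, 0 < delta /\
      forall y, x <= y < x + delta -> Rabs (F y - F x) < eps) /\
  (forall eps, 0 < eps -> exists M, forall x, x <= M -> Rabs (F x) < eps) /\
  (forall eps, 0 < eps -> exists M, forall x, M <= x -> Rabs (F x - 1) < eps).

Definition quant (F : R -> R) (t : R) : R := Rsup (fun x => F x <= t).

(* Integral over ]0,1[ of a nonnegative function, as the supremum of the
   Riemann integrals over compact subintervals [a,b] of ]0,1[. *)
Definition int01 (f : R -> R) : R :=
  Rsup (fun y => exists a b (pr : Riemann_integrable f a b),
          0 < a /\ a <= b /\ b < 1 /\ y = RiemannInt pr).

(* mu in P_r :  int |x|^r dmu = int_0^1 |F^{-1}(t)|^r dt < +oo. *)
Definition has_moment (F : R -> R) (r : R) : Prop :=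
  exists M, forall a b (pr : Riemann_integrable (fun t => rpow (Rabs (quant F t)) r) a b),
    0 < a -> a <= b -> b < 1 -> RiemannInt pr <= M.

Definition dr (r : R) (F G : R -> R) : R :=
  rpow (int01 (fun t => rpow (Rabs (quant F t - quant G t)) r)) (1 / r).

(* Distribution function of the empirical measure (1/n) sum_i delta_{x_i}. *)
Definition emp_cdf (x : list R) (y : R) : R :=
  INR (length (filter (fun xi => if Rle_dec xi y then true else false) x))
  / INR (length x).

Definition Xi (n : nat) (x : list R) : Prop := length x = n /\ Sorted Rle x.

(* d_r(delta^{u_n}_bullet, mu) = min_{x in Xi_n} d_r(delta^{u_n}_x, mu). *)
Definition dr_best (n : nat) (r : R) (F : R -> R) : R :=
  Rinf (fun d => exists x, Xi n x /\ d = dr r (emp_cdf x) F).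

Definition in_supp (F : R -> R) (x : R) : Prop :=
  forall eps, 0 < eps -> F (x - eps) < F (x + eps).

Definition supp_bounded (F : R -> R) : Prop :=
  exists M, forall x, in_supp F x -> Rabs x <= M.

(* Main.v *)
Require Import Defs.
From Stdlib Require Import Reals Lra List Sorted ClassicalEpsilon Classical Lia Arith RList FunctionalExtensionality.
From Coquelicot Require Coquelicot.
Open Scope R_scope.

Lemma Rsup_lub (E : R -> Prop) : bound E -> (exists x, E x) -> is_lub E (Rsup E).
Proof.
  intros Hb Hn. unfold Rsup.
  destruct (excluded_middle_informative (bound E /\ exists x, E x)) as [H|H].
  - exact (proj2_sig (completeness E (proj1 H) (proj2 H))).
  - exfalso; apply H; auto.
Qed.

Lemma Rsup_eq (E : R -> Prop) m : is_lub E m -> Rsup E = m.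
Proof.
  intros H. apply (is_lub_u E). 2: exact H.
  apply Rsup_lub. exists m; apply H.
  destruct (classic (exists x, E x)) as [Hx|Hx]; auto.
  exfalso. destruct H as [_ H]. assert (m <= m - 1).
  { apply H. intros x Ex. exfalso; apply Hx; eauto. } lra.
Qed.

Lemma Rsup_le (E : R -> Prop) B : (exists x, E x) -> (forall x, E x -> x <= B) -> Rsup E <= B.
Proof.
  intros Hn Hb. assert (Hl : is_lub E (Rsup E)).
  { apply Rsup_lub; auto. exists B; intros x Ex; auto. }
  apply Hl. intros x Ex; auto.
Qed.

Lemma Rsup_ge (E : R -> Prop) x B : E x -> (forall y, E y -> y <= B) -> x <= Rsup E.
Proof.
  intros Ex Hb. assert (Hl : is_lub E (Rsup E)).
  { apply Rsup_lub; eauto. exists B; intros y Ey; auto. }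
  apply Hl. auto.
Qed.

Lemma Rinf_le (E : R -> Prop) x : E x -> (forall y, E y -> 0 <= y) -> Rinf E <= x.
Proof.
  intros Ex H. unfold Rinf.
  assert (- x <= Rsup (fun y => E (- y))).
  { apply Rsup_ge with 0. rewrite Ropp_involutive; auto.
    intros y Ey. specialize (H _ Ey). lra. }
  lra.
Qed.

Lemma Rinf_ge0 (E : R -> Prop) x : E x -> (forall y, E y -> 0 <= y) -> 0 <= Rinf E.
Proof.
  intros Ex H. unfold Rinf.
  assert (Rsup (fun y => E (- y)) <= 0).
  { apply Rsup_le. exists (- x); rewrite Ropp_involutive; auto.
    intros y Ey. specialize (H _ Ey). lra. }
  lra.
Qed.

Lemma rpow_ge0 x r : 0 <= rpow x r.
Proof. unfold rpow. destruct (Rle_dec x 0). lra. unfold Rpower. left; apply exp_pos. Qed.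

Lemma rpow_pos x r : 0 < x -> rpow x r = Rpower x r.
Proof. intros H; unfold rpow; destruct (Rle_dec x 0); [lra|auto]. Qed.

Lemma rpow_0 r : rpow 0 r = 0.
Proof. unfold rpow; destruct (Rle_dec 0 0); lra. Qed.

Lemma rpow_le x y r : 0 <= r -> 0 <= x <= y -> rpow x r <= rpow y r.
Proof.
  intros Hr [Hx Hxy]. destruct (Req_dec x 0) as [->|Hx0].
  - rewrite rpow_0; apply rpow_ge0.
  - rewrite !rpow_pos by lra. apply Rle_Rpower_l; lra.
Qed.

Lemma rpow_lt x y r : 0 < r -> 0 <= x < y -> rpow x r < rpow y r.
Proof.
  intros Hr [Hx Hxy]. destruct (Req_dec x 0) as [->|Hx0].
  - rewrite rpow_0, rpow_pos by lra. unfold Rpower; apply exp_pos.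
  - rewrite !rpow_pos by lra. apply Rlt_Rpower_l; lra.
Qed.

Lemma Rpower_pos x y : 0 < Rpower x y.
Proof. unfold Rpower; apply exp_pos. Qed.

Section Q.
Variable F : R -> R.
Hypothesis HF : is_cdf F.

Lemma F_mono x y : x <= y -> F x <= F y.
Proof. apply HF. Qed.

Lemma quant_lub t : 0 < t < 1 -> is_lub (fun x => F x <= t) (quant F t).
Proof.
  intros Ht. unfold quant. apply Rsup_lub.
  - destruct HF as (_ & _ & _ & H4). destruct (H4 (1 - t)) as [M HM]; [lra|].
    exists M. intros x Hx. destruct (Rle_dec x M) as [|Hn]; auto.
    specialize (HM x ltac:(lra)). apply Rabs_def2 in HM. lra.
  - destruct HF as (_ & _ & H3 & _). destruct (H3 t) as [M HM]; [lra|].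
    exists M. specialize (HM M (Rle_refl _)). apply Rabs_def2 in HM. lra.
Qed.

Lemma quant_ge t x : 0 < t < 1 -> F x <= t -> x <= quant F t.
Proof. intros Ht Hx. apply (quant_lub t Ht). auto. Qed.

Lemma quant_F t x : 0 < t < 1 -> x < quant F t -> F x <= t.
Proof.
  intros Ht Hx. destruct (quant_lub t Ht) as [_ H].
  destruct (classic (exists y, x <= y /\ F y <= t)) as [[y [Hy1 Hy2]]|Hn].
  - eapply Rle_trans; [apply F_mono; eauto | auto].
  - exfalso. assert (quant F t <= x); [|lra].
    apply H. intros y Hy. destruct (Rle_dec y x); auto.
    exfalso; apply Hn; exists y; split; auto; lra.
Qed.

Lemma quant_mono t1 t2 : 0 < t1 -> t1 <= t2 -> t2 < 1 -> quant F t1 <= quant F t2.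
Proof.
  intros H1 H12 H2. destruct (quant_lub t1 ltac:(lra)) as [_ H].
  apply H. intros x Hx. apply quant_ge; lra.
Qed.

End Q.

Definition cntle (y : R) (l : list R) : nat :=
  length (filter (fun xi => if Rle_dec xi y then true else false) l).


Lemma sorted_head_le (h : R) tl i : Sorted Rle (h :: tl) -> (i < length tl)%nat -> h <= nth i tl 0.
Proof.
  intros Hs Hi. apply Sorted_StronglySorted in Hs; [|intros a b c; lra].
  inversion Hs; subst. rewrite Forall_forall in H2. apply H2. apply nth_In; auto.
Qed.

Lemma cntle_head_gt y h tl : Sorted Rle (h :: tl) -> y < h -> cntle y (h :: tl) = 0%nat.
Proof.
  intros Hs Hy. apply Sorted_StronglySorted in Hs; [|intros a b c; lra].
  revert h Hs Hy. induction tl as [|h2 tl IH]; intros h Hs Hy.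
  - unfold cntle; simpl. destruct (Rle_dec h y); [lra|auto].
  - unfold cntle in *; simpl. destruct (Rle_dec h y); [lra|].
    inversion Hs; subst. inversion H2; subst.
    specialize (IH h2 H1 ltac:(lra)). simpl in IH. exact IH.
Qed.

Lemma cntle_char l : Sorted Rle l -> forall i y, (i < length l)%nat ->
  ((cntle y l <= i)%nat <-> y < nth i l 0).
Proof.
  induction l as [|h tl IH]; intros Hs i y Hi; simpl in Hi; [lia|].
  destruct (Rle_dec h y) as [Hhy|Hhy].
  - assert (Hc : cntle y (h :: tl) = S (cntle y tl)).
    { unfold cntle; simpl; destruct (Rle_dec h y); [reflexivity|lra]. }
    rewrite Hc. destruct i as [|i].
    + simpl. split; intros; [lia|lra].
    + simpl. rewrite <- IH; [lia| |lia]. inversion Hs; auto.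
  - rewrite cntle_head_gt by (auto; lra). split; intros _; [|lia].
    destruct i as [|i]; simpl; [lra|].
    pose proof (sorted_head_le h tl i Hs ltac:(lia)). lra.
Qed.

Lemma quant_emp (x : list R) n i t : Xi n x -> (0 < n)%nat -> (i < n)%nat ->
  INR i / INR n < t < INR (S i) / INR n -> quant (emp_cdf x) t = nth i x 0.
Proof.
  intros [Hl Hs] Hn Hi Ht. unfold quant. apply Rsup_eq.
  assert (Hnr : 0 < INR n) by (apply lt_0_INR; auto).
  assert (key : forall y, emp_cdf x y <= t <-> y < nth i x 0).
  { intros y. rewrite <- (cntle_char x Hs i y) by lia. unfold emp_cdf. fold (cntle y x).
    rewrite Hl. split; intros H.
    - destruct (Compare_dec.le_lt_dec (cntle y x) i) as [|Hlt]; auto. exfalso.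
      apply le_INR in Hlt. rewrite S_INR in Ht, Hlt.
      assert (INR (cntle y x) / INR n >= (INR i + 1) / INR n).
      { unfold Rdiv. apply Rle_ge, Rmult_le_compat_r; [left; apply Rinv_0_lt_compat; auto| lra]. }
      lra.
    - apply le_INR in H.
      assert (INR (cntle y x) / INR n <= INR i / INR n).
      { unfold Rdiv. apply Rmult_le_compat_r; [left; apply Rinv_0_lt_compat; auto| lra]. }
      lra. }
  split.
  - intros y Hy. apply key in Hy. lra.
  - intros b Hb. destruct (Rle_dec (nth i x 0) b) as [|Hn']; auto. exfalso.
    set (z := (b + nth i x 0) / 2).
    assert (z <= b) by (apply Hb, key; unfold z; lra). unfold z in *; lra.
Qed.

Lemma IsStepFun_ext f g a b : a <= b -> (forall t, a < t < b -> f t = g t) ->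
  IsStepFun f a b -> IsStepFun g a b.
Proof.
  intros Hab Hfg [l [lf H]]. exists l. exists lf.
  unfold adapted_couple in *. destruct H as (H1 & H2 & H3 & H4 & H5).
  repeat split; auto.
  intros i Hi x Hx. unfold open_interval in Hx.
  assert (Hmin : Rmin a b = a) by (unfold Rmin; destruct (Rle_dec a b); lra).
  assert (Hmax : Rmax a b = b) by (unfold Rmax; destruct (Rle_dec a b); lra).
  pose proof (proj1 (RList_P6 l) H1) as Hm.
  assert (pos_Rl l 0 <= pos_Rl l i) by (apply Hm; lia).
  assert (pos_Rl l (S i) <= pos_Rl l (pred (length l))) by (apply Hm; lia).
  rewrite <- Hfg by lra. apply H5; auto.
Qed.

Definition glue (c : R) (h1 h2 : R -> R) := fun t => if Rle_dec t c then h1 t else h2 t.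

Lemma glue_step a c b (h1 : StepFun a c) (h2 : StepFun c b) : a <= c -> c <= b ->
  IsStepFun (glue c h1 h2) a b.
Proof.
  intros Hac Hcb. apply StepFun_P41 with c; auto.
  - apply IsStepFun_ext with h1; auto. 2: apply pre.
    intros t Ht; unfold glue; destruct (Rle_dec t c); auto; lra.
  - apply IsStepFun_ext with h2; auto. 2: apply pre.
    intros t Ht; unfold glue; destruct (Rle_dec t c); auto; lra.
Qed.

Lemma glue_int a c b (h1 : StepFun a c) (h2 : StepFun c b) (Hac : a <= c) (Hcb : c <= b) :
  RiemannInt_SF (mkStepFun (glue_step a c b h1 h2 Hac Hcb)) <= RiemannInt_SF h1 + RiemannInt_SF h2.
Proof.
  assert (p1 : IsStepFun (glue c h1 h2) a c).
  { apply IsStepFun_ext with h1; auto. 2: apply pre.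
    intros t Ht; unfold glue; destruct (Rle_dec t c); auto; lra. }
  assert (p2 : IsStepFun (glue c h1 h2) c b).
  { apply IsStepFun_ext with h2; auto. 2: apply pre.
    intros t Ht; unfold glue; destruct (Rle_dec t c); auto; lra. }
  rewrite <- (StepFun_P43 p1 p2).
  apply Rplus_le_compat.
  - apply StepFun_P37; auto. intros t Ht; simpl; unfold glue; destruct (Rle_dec t c); lra.
  - apply StepFun_P37; auto. intros t Ht; simpl; unfold glue; destruct (Rle_dec t c); lra.
Qed.

Lemma mono_steps f d (Hd : 0 < d) : forall N a b, a <= b -> b - a <= INR (S N) * d ->
  (forall x y, a <= x -> x <= y -> y <= b -> f x <= f y) ->
  { phi : StepFun a b & { psi : StepFun a b |
     (forall t, a <= t <= b -> Rabs (f t - phi t) <= psi t) /\ (forall t, 0 <= psi t) /\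
     RiemannInt_SF psi <= d * (f b - f a) } }.
Proof.
  assert (base : forall a b, a <= b -> b - a <= d ->
    (forall x y, a <= x -> x <= y -> y <= b -> f x <= f y) ->
    { phi : StepFun a b & { psi : StepFun a b |
     (forall t, a <= t <= b -> Rabs (f t - phi t) <= psi t) /\ (forall t, 0 <= psi t) /\
     RiemannInt_SF psi <= d * (f b - f a) } }).
  { intros a b Hab Hd' Hm.
    exists (mkStepFun (StepFun_P4 a b (f a))).
    exists (mkStepFun (StepFun_P4 a b (f b - f a))).
    assert (f a <= f b) by (apply Hm; lra).
    split; [|split].
    - intros t Ht; simpl; unfold fct_cte.
      assert (f a <= f t) by (apply Hm; lra). assert (f t <= f b) by (apply Hm; lra).
      rewrite Rabs_right; lra.
    - intros t; simpl; unfold fct_cte; lra.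
    - rewrite StepFun_P18. rewrite Rmult_comm. apply Rmult_le_compat_r; lra. }
  induction N as [|N IH]; intros a b Hab Hl Hm.
  - apply base; auto. simpl in Hl; lra.
  - destruct (Rle_dec (b - a) d) as [Hle|Hgt].
    + apply base; auto.
    + set (c := a + d).
      assert (Hac : a <= c) by (unfold c; lra). assert (Hcb : c <= b) by (unfold c; lra).
      destruct (base a c Hac ltac:(unfold c; lra)) as [phi1 [psi1 [A1 [B1 C1]]]].
      { intros; apply Hm; lra. }
      destruct (IH c b Hcb) as [phi2 [psi2 [A2 [B2 C2]]]].
      { rewrite S_INR in Hl. unfold c; lra. }
      { intros; apply Hm; lra. }
      exists (mkStepFun (glue_step a c b phi1 phi2 Hac Hcb)).
      exists (mkStepFun (glue_step a c b psi1 psi2 Hac Hcb)).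
      split; [|split].
      * intros t Ht; simpl; unfold glue; destruct (Rle_dec t c).
        apply A1; lra. apply A2; lra.
      * intros t; simpl; unfold glue; destruct (Rle_dec t c); auto.
      * eapply Rle_trans. apply glue_int. lra.
Qed.

Lemma mono_integrable f a b : a <= b -> (forall x y, a <= x -> x <= y -> y <= b -> f x <= f y) ->
  Riemann_integrable f a b.
Proof.
  intros Hab Hm eps.
  set (K := f b - f a + 1).
  assert (HK : 0 < K) by (unfold K; assert (f a <= f b) by (apply Hm; lra); lra).
  set (d := eps / (2 * K)).
  assert (Hd : 0 < d) by (unfold d; apply Rdiv_lt_0_compat; [apply cond_pos|lra]).
  destruct (archimed ((b - a) / d)) as [Har _].
  assert (HN : exists N : nat, b - a <= INR (S N) * d).
  { assert (0 <= IZR (up ((b - a) / d))).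
    { apply Rle_trans with ((b-a)/d); [|lra]. unfold Rdiv; apply Rmult_le_pos; [lra | left; apply Rinv_0_lt_compat; lra]. }
    destruct (up ((b - a) / d)) eqn:E; try (exfalso; pose proof (IZR_lt _ _ (Pos2Z.neg_is_neg p)); lra).
    - exists 0%nat. simpl. simpl in Har.
      apply (Rmult_lt_compat_r d) in Har; auto. unfold Rdiv in Har. rewrite Rmult_assoc, Rinv_l in Har; lra.
    - exists (Pos.to_nat p). rewrite S_INR, INR_IZR_INZ, Znat.positive_nat_Z.
      apply (Rmult_lt_compat_r d) in Har; auto. unfold Rdiv in Har. rewrite Rmult_assoc, Rinv_l in Har by lra.
      nra. }
  destruct (constructive_indefinite_description _ HN) as [N HNd].
  destruct (mono_steps f d Hd N a b Hab HNd Hm) as [phi [psi [A [B C]]]].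
  exists phi, psi. split.
  - intros t Ht. unfold Rmin, Rmax in Ht. destruct (Rle_dec a b); [|lra]. apply A; lra.
  - assert (0 <= RiemannInt_SF psi).
    { rewrite <- (Rmult_0_l (b - a)). rewrite <- (StepFun_P18 a b 0).
      apply StepFun_P37; auto. }
    rewrite Rabs_right by lra.
    assert (d * (f b - f a) < eps).
    { assert (f a <= f b) by (apply Hm; lra).
      assert (d * (f b - f a) <= d * K) by (apply Rmult_le_compat_l; unfold K; lra).
      assert (d * K = eps / 2) by (unfold d; field; lra).
      pose proof (cond_pos eps). lra. }
    lra.
Qed.

Module Refl.
Import Coquelicot.Coquelicot.

Lemma RI_reflect f a b a2 b2 (pr : Riemann_integrable f a2 b2)
  (pr' : Riemann_integrable (fun t => f (1 - t)) a b) :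
  a2 = 1 - b -> b2 = 1 - a -> RiemannInt pr' = RiemannInt pr.
Proof.
  intros -> ->.
  pose proof (ex_RInt_Reals_aux_1 f _ _ pr) as H.
  apply is_RInt_swap in H.
  remember (RiemannInt pr) as I eqn:EI.
  assert (Ea : 1 - a = -1 * a + 1) by ring.
  assert (Eb : 1 - b = -1 * b + 1) by ring.
  rewrite Ea, Eb in H.
  apply (is_RInt_comp_lin f (-1) 1 a b) in H.
  apply (is_RInt_scal _ _ _ (-1)) in H.
  pose proof (ex_RInt_Reals_aux_1 _ _ _ pr') as H'.
  apply (@is_RInt_unique R_CompleteNormedModule) in H'.
  assert (Hv : scal (-1) (opp I) = I).
  { unfold scal, opp; simpl; unfold mult; simpl. ring. }
  unfold scal, opp in H, Hv; simpl in H, Hv; unfold mult in H, Hv; simpl in H, Hv. rewrite Hv in H.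
  assert (H2 : is_RInt (fun t => f (1 - t)) a b I).
  { eapply is_RInt_ext; [|apply H]. intros x _. simpl.
    unfold scal; simpl; unfold mult; simpl. replace (-1 * x + 1) with (1 - x) by ring. ring. }
  apply (@is_RInt_unique R_CompleteNormedModule) in H2. rewrite <- H', H2. reflexivity.
Qed.

End Refl.
Import Refl.

Lemma rpow_abs_split x s : rpow (Rabs x) s = rpow (Rmax x 0) s + rpow (Rmax (- x) 0) s.
Proof.
  unfold Rmax. destruct (Rle_dec x 0); destruct (Rle_dec (-x) 0).
  - assert (x = 0) by lra. subst. rewrite Rabs_R0, rpow_0. lra.
  - rewrite Rabs_left1 by lra. rewrite rpow_0. lra.
  - rewrite Rabs_right by lra. rewrite rpow_0. lra.
  - lra.
Qed.

Definition monoQ (Q : R -> R) := forall x y, 0 < x -> x <= y -> y < 1 -> Q x <= Q y.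

Lemma G_int Q s : monoQ Q -> 0 <= s -> forall a b, 0 < a -> a <= b -> b < 1 ->
  Riemann_integrable (fun t => rpow (Rabs (Q t)) s) a b.
Proof.
  intros HQ Hs a b Ha Hab Hb.
  replace (fun t => rpow (Rabs (Q t)) s) with
    (fun t => rpow (Rmax (Q t) 0) s + (-1) * (- rpow (Rmax (- Q t) 0) s)).
  2: { apply functional_extensionality; intros t. rewrite rpow_abs_split. ring. }
  apply RiemannInt_P10.
  - apply mono_integrable; auto. intros x y Hx Hxy Hy. apply rpow_le; auto.
    split. apply Rmax_r. apply Rle_max_compat_r. apply HQ; lra.
  - apply mono_integrable; auto. intros x y Hx Hxy Hy. apply Ropp_le_contravar, rpow_le; auto.
    split. apply Rmax_r. apply Rle_max_compat_r. apply Ropp_le_contravar, HQ; lra.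
Qed.

Lemma RI_nonneg f a b (pr : Riemann_integrable f a b) : a <= b -> (forall t, a < t < b -> 0 <= f t) ->
  0 <= RiemannInt pr.
Proof.
  intros Hab H. pose proof (RiemannInt_P19 (RiemannInt_P14 a b 0) pr Hab ltac:(intros; unfold fct_cte; auto)) as H1.
  rewrite RiemannInt_P15 in H1. lra.
Qed.

Section Tail.
Variable Q : R -> R.
Variable s : R.
Hypothesis HQ : monoQ Q.
Hypothesis Hs : 0 < s.
Let G := fun t => rpow (Rabs (Q t)) s.
Hypothesis Hmom : exists M, forall a b (pr : Riemann_integrable G a b),
    0 < a -> a <= b -> b < 1 -> RiemannInt pr <= M.

Lemma tail0 eps : 0 < eps -> exists d, 0 < d < 1 /\
  forall a b (pr : Riemann_integrable G a b), 0 < a -> a <= b -> b <= d -> RiemannInt pr <= eps.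
Proof.
  intros He. destruct Hmom as [M HM].
  set (E := fun y => exists a b (pr : Riemann_integrable G a b), 0 < a /\ a <= b /\ b < 1 /\ y = RiemannInt pr).
  assert (HE : is_lub E (Rsup E)).
  { apply Rsup_lub. exists M. intros y (a & b & pr & H1 & H2 & H3 & ->). apply HM; auto.
    exists (RiemannInt (RiemannInt_P7 G (1/2))). exists (1/2), (1/2), (RiemannInt_P7 G (1/2)).
    repeat split; lra. }
  set (S := Rsup E) in *.
  assert (Hex : exists y, E y /\ S - eps < y).
  { apply NNPP; intros Hn. assert (S <= S - eps); [|lra].
    apply HE. intros y Ey. destruct (Rle_dec y (S - eps)); auto. exfalso; apply Hn; exists y; split; auto; lra. }
  destruct Hex as [y [(a0 & b0 & pr0 & H1 & H2 & H3 & ->) Hy]].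
  exists a0. split; [lra|].
  intros a b pr Ha Hab Hb.
  assert (prm : Riemann_integrable G b a0) by (apply (G_int Q s HQ (Rlt_le _ _ Hs) b a0); lra).
  pose proof (RiemannInt_P21 Hab Hb pr prm) as pra.
  pose proof (RiemannInt_P21 (Rle_trans _ _ _ Hab Hb) H2 pra pr0) as prt.
  pose proof (RiemannInt_P26 pr prm pra) as C1.
  pose proof (RiemannInt_P26 pra pr0 prt) as C2.
  assert (RiemannInt prt <= S).
  { apply HE. exists a, b0, prt. repeat split; lra. }
  assert (0 <= RiemannInt prm).
  { apply RI_nonneg; auto. intros; apply rpow_ge0. }
  lra.
Qed.

Lemma point0 eps : 0 < eps -> exists d, 0 < d <= 1/2 /\ forall t, 0 < t <= d -> t * G t <= eps.
Proof.
  intros He. destruct (tail0 (eps / 2)) as [d1 [Hd1 Ht1]]; [lra|].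
  set (C0 := G (1/2)).
  assert (HC0 : 0 <= C0) by apply rpow_ge0.
  exists (Rmin (Rmin d1 (1/2)) (eps / (2 * (C0 + 1)))).
  assert (Hm1 : Rmin (Rmin d1 (1/2)) (eps / (2 * (C0 + 1))) <= Rmin d1 (1/2)) by apply Rmin_l.
  assert (Hm2 : Rmin (Rmin d1 (1/2)) (eps / (2 * (C0 + 1))) <= eps / (2 * (C0 + 1))) by apply Rmin_r.
  assert (Hm3 : Rmin d1 (1/2) <= d1) by apply Rmin_l.
  assert (Hm4 : Rmin d1 (1/2) <= 1/2) by apply Rmin_r.
  assert (Hp : 0 < eps / (2 * (C0 + 1))) by (apply Rdiv_lt_0_compat; lra).
  split.
  { split; [|lra]. apply Rmin_glb_lt; [apply Rmin_glb_lt|]; lra. }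
  intros t [Ht0 Ht].
  destruct (Rle_dec (Q t) 0) as [HQt|HQt].
  -
    assert (Hb : forall a, 0 < a < t -> G t * (t - a) <= eps / 2).
    { intros a Ha. assert (pr : Riemann_integrable G a t) by (apply (G_int Q s HQ (Rlt_le _ _ Hs)); lra).
      pose proof (RiemannInt_const_bound (f:=G) (a:=a) (b:=t) (l:=G t) (u:=G a) pr ltac:(lra)) as Hc.
      assert (RiemannInt pr <= eps / 2) by (apply Ht1; lra).
      assert (G t * (t - a) <= RiemannInt pr); [|lra].
      apply Hc. intros x Hx. unfold G. split; apply rpow_le; try lra.
      + split. apply Rabs_pos. assert (Q x <= Q t) by (apply HQ; lra).
        rewrite !Rabs_left1 by lra. lra.
      + split. apply Rabs_pos. assert (Q a <= Q x) by (apply HQ; lra).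
        assert (Q x <= Q t) by (apply HQ; lra).
        rewrite !Rabs_left1 by lra. lra. }
    apply Rnot_lt_le. intros Hlt.
    assert (HG : 0 < G t).
    { destruct (Rle_dec (G t) 0); [|lra]. assert (t * G t <= 0) by nra. lra. }
    set (a := (t * G t - eps / 2) / (2 * G t)).
    assert (Ha0 : 0 < a) by (unfold a; apply Rdiv_lt_0_compat; lra).
    assert (Hat : a < t).
    { unfold a. apply Rmult_lt_reg_r with (2 * G t); [lra|]. unfold Rdiv. rewrite Rmult_assoc, Rinv_l by lra. lra. }
    specialize (Hb a ltac:(lra)).
    assert (G t * (t - a) = t * G t / 2 + eps / 4) by (unfold a; field; lra).
    lra.
  -
    assert (G t <= C0).
    { unfold G, C0. apply rpow_le; [lra|]. split. apply Rabs_pos.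
      assert (Q t <= Q (1/2)) by (apply HQ; lra). rewrite !Rabs_right by lra. lra. }
    assert (t * G t <= t * C0) by (apply Rmult_le_compat_l; lra).
    assert (t * C0 <= eps / (2 * (C0 + 1)) * C0) by (apply Rmult_le_compat_r; lra).
    assert (eps / (2 * (C0 + 1)) * C0 <= eps / 2).
    { apply Rmult_le_reg_r with (2 * (C0 + 1)); [lra|].
      replace (eps / (2 * (C0 + 1)) * C0 * (2 * (C0 + 1))) with (eps * C0) by (field; lra).
      nra. }
    lra.
Qed.

End Tail.

Fixpoint sumB (B : nat -> R) (m : nat) : R :=
  match m with O => 0 | S m => sumB B m + B m end.

Lemma sumB_ge0 B m : (forall i, 0 <= B i) -> 0 <= sumB B m.
Proof. intros H; induction m; simpl; [lra|]. specialize (H m); lra. Qed.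

Lemma sumB_plus x y m : sumB (fun i => x i + y i) m = sumB x m + sumB y m.
Proof. induction m; simpl; lra. Qed.

Lemma sumB_div x c m : sumB (fun i => x i / c) m = sumB x m / c.
Proof. induction m; simpl. unfold Rdiv; ring. rewrite IHm. unfold Rdiv; ring. Qed.

Lemma sumB_ind k c m : sumB (fun i => if Nat.eqb i k then c else 0) m = if Nat.ltb k m then c else 0.
Proof.
  induction m; simpl. destruct k; simpl; lra.
  rewrite IHm. destruct (Nat.eqb_spec m k); destruct (Nat.ltb_spec k m); destruct (Nat.ltb_spec k (S m)); try lia; subst; lra.
Qed.

Lemma sumB_le x y m : (forall i, (i < m)%nat -> x i <= y i) -> sumB x m <= sumB y m.
Proof. induction m; simpl; intros H; [lra|]. assert (x m <= y m) by (apply H; lia). assert (sumB x m <= sumB y m) by (apply IHm; intros; apply H; lia). lra. Qed.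

Lemma sumB_tele g m : sumB (fun i => g (S i) - g i) m = g m - g O.
Proof. induction m; simpl; [lra|]. rewrite IHm; lra. Qed.

Lemma sumB_scal c x m : sumB (fun i => c * x i) m = c * sumB x m.
Proof. induction m; simpl; [ring|]. rewrite IHm; ring. Qed.

Lemma split_bound f n (Hn : (0 < n)%nat) (B : nat -> R) (HB : forall i, 0 <= B i)
  (Hp : forall i a b (pr : Riemann_integrable f a b), (i < n)%nat ->
        INR i / INR n <= a -> a <= b -> b <= INR (S i) / INR n -> 0 < a -> b < 1 ->
        RiemannInt pr <= B i) :
  forall a b (pr : Riemann_integrable f a b), 0 < a -> a <= b -> b < 1 -> RiemannInt pr <= sumB B n.
Proof.
  assert (Hnr : 0 < INR n) by (apply lt_0_INR; auto).
  assert (P : forall m, (m <= n)%nat -> forall a b (pr : Riemann_integrable f a b),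
            0 < a -> a <= b -> b < 1 -> b <= INR m / INR n -> RiemannInt pr <= sumB B m).
  { induction m as [|m IH]; intros Hm a b pr Ha Hab Hb Hbm.
    - simpl in Hbm. unfold Rdiv in Hbm. rewrite Rmult_0_l in Hbm. lra.
    - simpl sumB. pose proof (HB m).
      destruct (Rle_dec b (INR m / INR n)) as [Hle|Hgt].
      + pose proof (IH ltac:(lia) a b pr Ha Hab Hb Hle). lra.
      + destruct (Rle_dec (INR m / INR n) a) as [Hle2|Hgt2].
        * pose proof (sumB_ge0 B m HB). pose proof (Hp m a b pr ltac:(lia) Hle2 Hab Hbm Ha Hb). lra.
        * set (c := INR m / INR n) in *.
          assert (pr1 : Riemann_integrable f a c) by (apply (RiemannInt_P22 pr); lra).
          assert (pr2 : Riemann_integrable f c b) by (apply (RiemannInt_P23 pr); lra).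
          rewrite <- (RiemannInt_P26 pr1 pr2 pr).
          pose proof (IH ltac:(lia) a c pr1 Ha ltac:(lra) ltac:(lra) (Rle_refl _)).
          assert (0 <= c) by (unfold c, Rdiv; apply Rmult_le_pos; [apply pos_INR| left; apply Rinv_0_lt_compat; auto]).
          pose proof (Hp m c b pr2 ltac:(lia) (Rle_refl _) ltac:(lra) Hbm ltac:(lra) Hb). lra. }
  intros a b pr Ha Hab Hb. apply (P n (Nat.le_refl _)); auto.
  unfold Rdiv; rewrite Rinv_r; lra.
Qed.

Lemma rpow_mul c A r : 0 < c -> 0 <= A -> rpow (c * A) r = Rpower c r * rpow A r.
Proof.
  intros Hc HA. destruct (Req_dec A 0) as [->|HA0].
  - rewrite Rmult_0_r, !rpow_0; ring.
  - rewrite !rpow_pos by nra. rewrite Rpower_mult_distr; auto; lra.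
Qed.

Lemma thresh A L r s : 0 <= A -> 0 < L -> 0 <= r -> r <= s ->
  rpow A r <= Rpower L (r - s) * rpow A s + Rpower L r.
Proof.
  intros HA HL Hr Hrs. pose proof (Rpower_pos L (r - s)) as P1.
  destruct (Rle_dec A L) as [HAL|HAL].
  - assert (rpow A r <= Rpower L r) by (rewrite <- (rpow_pos L) by lra; apply rpow_le; lra).
    pose proof (rpow_ge0 A s). nra.
  - rewrite !rpow_pos by lra.
    assert (E : Rpower A r = Rpower A (r - s) * Rpower A s) by (rewrite <- Rpower_plus; f_equal; ring).
    rewrite E. pose proof (Rpower_pos L r). pose proof (Rpower_pos A s).
    assert (Rpower A (r - s) <= Rpower L (r - s)).
    { unfold Rpower. destruct (Req_dec r s) as [->|Hne].
      - replace (s - s) with 0 by ring. rewrite !Rmult_0_l; lra.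
      - left. apply exp_increasing. assert (ln L < ln A) by (apply ln_increasing; lra).
        assert (r - s < 0) by lra. nra. }
    nra.
Qed.

Lemma rpow_inv_le A B s : 0 < s -> 0 <= A -> 0 < B -> rpow A s <= Rpower B s -> A <= B.
Proof.
  intros Hs HA HB H. destruct (Rle_dec A B) as [|Hn]; auto. exfalso.
  assert (rpow B s < rpow A s) by (apply rpow_lt; lra). rewrite rpow_pos in H0 by lra. lra.
Qed.

Lemma rpow_pow_le x W r : 1 <= r -> 0 <= x <= W -> rpow x r <= rpow W (r - 1) * x.
Proof.
  intros Hr [Hx HxW]. destruct (Req_dec x 0) as [->|Hx0].
  - rewrite rpow_0; lra.
  - rewrite !rpow_pos by lra.
    replace (Rpower x r) with (Rpower x (r - 1) * x).
    2: { pattern x at 2; rewrite <- (Rpower_1 x) by lra. rewrite <- Rpower_plus. f_equal; ring. }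
    apply Rmult_le_compat_r; [lra|]. apply Rle_Rpower_l; lra.
Qed.

Lemma rpow_W W r : 0 <= W -> rpow W (r - 1) * W = rpow W r.
Proof.
  intros HW. destruct (Req_dec W 0) as [->|H0]. rewrite !rpow_0; ring.
  rewrite !rpow_pos by lra. pattern W at 2; rewrite <- (Rpower_1 W) by lra.
  rewrite <- Rpower_plus. f_equal; ring.
Qed.

Lemma grid_sum (g : nat -> R) n r : 1 <= r -> (forall i, (i < n)%nat -> g i <= g (S i)) ->
  sumB (fun i => rpow (g (S i) - g i) r) n <= rpow (g n - g O) r.
Proof.
  intros Hr Hg.
  assert (Hmon : forall i j, (i <= j <= n)%nat -> g i <= g j).
  { intros i j Hij. destruct Hij as [Hij Hjn]. induction Hij; [lra|]. specialize (Hg m ltac:(lia)). specialize (IHHij ltac:(lia)). lra. }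
  set (W := g n - g O).
  assert (HW : 0 <= W) by (unfold W; pose proof (Hmon 0 n)%nat; assert (g 0%nat <= g n) by (apply Hmon; lia); lra).
  apply Rle_trans with (sumB (fun i => rpow W (r - 1) * (g (S i) - g i)) n).
  - apply sumB_le. intros i Hi. apply rpow_pow_le; auto. split. specialize (Hg i Hi); lra.
    unfold W. assert (g O <= g i) by (apply Hmon; lia). assert (g (S i) <= g n) by (apply Hmon; lia). lra.
  - rewrite sumB_scal, sumB_tele. fold W. rewrite rpow_W; auto. lra.
Qed.

Definition cpt (n i : nat) := (2 * INR i + 1) / (2 * INR n).
Definition xs (F : R -> R) (n : nat) := map (fun i => quant F (cpt n i)) (seq 0 n).
Definition fX (F : R -> R) (n : nat) (r : R) :=
  fun t => rpow (Rabs (quant (emp_cdf (xs F n)) t - quant F t)) r.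

Lemma div_lt_iff a b n : 0 < n -> (a / n < b / n <-> a < b).
Proof. intros Hn. unfold Rdiv. split; intros H.
  - apply Rmult_lt_reg_r with (/ n). apply Rinv_0_lt_compat; auto. auto.
  - apply Rmult_lt_compat_r; auto. apply Rinv_0_lt_compat; auto. Qed.

Lemma cpt_in n i : (i < n)%nat -> INR i / INR n < cpt n i < INR (S i) / INR n.
Proof.
  intros Hi. assert (Hn : 0 < INR n) by (apply lt_0_INR; lia). unfold cpt. rewrite S_INR.
  split.
  - replace (INR i / INR n) with (2 * INR i / (2 * INR n)) by (field; lra).
    apply div_lt_iff; lra.
  - replace ((INR i + 1) / INR n) with ((2 * INR i + 2) / (2 * INR n)) by (field; lra).
    apply div_lt_iff; lra.
Qed.

Lemma grid_01 n i : (i <= n)%nat -> (0 < n)%nat -> 0 <= INR i / INR n <= 1.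
Proof.
  intros Hi Hn. assert (0 < INR n) by (apply lt_0_INR; lia). apply le_INR in Hi. split.
  - unfold Rdiv; apply Rmult_le_pos; [apply pos_INR| left; apply Rinv_0_lt_compat; auto].
  - unfold Rdiv. apply Rmult_le_reg_r with (INR n); auto. rewrite Rmult_assoc, Rinv_l; lra.
Qed.

Lemma sorted_map_seq (g : nat -> R) start len :
  (forall i j, (start <= i)%nat -> (i <= j)%nat -> (j < start + len)%nat -> g i <= g j) ->
  Sorted Rle (map g (seq start len)).
Proof.
  revert start. induction len as [|len IH]; intros start H; simpl; [constructor|].
  constructor. apply IH. intros; apply H; lia.
  destruct len; simpl; constructor. apply H; lia.
Qed.

Section Main.
Variable F : R -> R.
Hypothesis HF : is_cdf F.
Variable r : R.
Hypothesis Hr : 1 <= r.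
Variable n : nat.
Hypothesis Hn : (0 < n)%nat.

Lemma Hnr : 0 < INR n.
Proof. apply lt_0_INR; auto. Qed.

Lemma cpt_01 i : (i < n)%nat -> 0 < cpt n i < 1.
Proof.
  intros Hi. pose proof (cpt_in n i Hi). pose proof (grid_01 n i ltac:(lia) Hn).
  pose proof (grid_01 n (S i) ltac:(lia) Hn). lra.
Qed.

Lemma xs_Xi : Xi n (xs F n).
Proof.
  split. unfold xs. rewrite length_map, length_seq; auto.
  apply sorted_map_seq. intros i j _ Hij Hj. simpl in Hj.
  apply quant_mono; auto. apply cpt_01; lia.
  unfold cpt. apply Rmult_le_compat_r. left; apply Rinv_0_lt_compat. pose proof Hnr; lra.
  apply le_INR in Hij; lra. apply cpt_01; lia.
Qed.

Lemma xs_nth i : (i < n)%nat -> nth i (xs F n) 0 = quant F (cpt n i).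
Proof.
  intros Hi. unfold xs.
  transitivity (nth i (map (fun i => quant F (cpt n i)) (seq 0 n)) ((fun i => quant F (cpt n i)) 0%nat)).
  apply nth_indep; rewrite length_map, length_seq; auto.
  rewrite (map_nth (fun i => quant F (cpt n i)) (seq 0 n) 0%nat i), seq_nth; auto.
Qed.

Lemma fX_piece i t : (i < n)%nat -> INR i / INR n < t < INR (S i) / INR n ->
  fX F n r t = rpow (Rabs (quant F (cpt n i) - quant F t)) r.
Proof.
  intros Hi Ht. unfold fX. rewrite (quant_emp (xs F n) n i t xs_Xi Hn Hi Ht), xs_nth; auto.
Qed.

Lemma dr_best_bound B : 0 <= B ->
  (forall a b (pr : Riemann_integrable (fX F n r) a b), 0 < a -> a <= b -> b < 1 -> RiemannInt pr <= B) ->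
  0 <= dr_best n r F <= rpow B (1 / r).
Proof.
  intros HB H.
  assert (Hel : (fun d => exists x, Xi n x /\ d = dr r (emp_cdf x) F) (dr r (emp_cdf (xs F n)) F)).
  { exists (xs F n); split; auto. apply xs_Xi. }
  assert (Hpos : forall y, (fun d => exists x, Xi n x /\ d = dr r (emp_cdf x) F) y -> 0 <= y).
  { intros y [x [_ ->]]. unfold dr. apply rpow_ge0. }
  unfold dr_best. split. apply (Rinf_ge0 _ _ Hel Hpos).
  eapply Rle_trans. apply (Rinf_le _ _ Hel Hpos).
  unfold dr. apply rpow_le. left; apply Rdiv_lt_0_compat; lra.
  fold (fX F n r).
  set (f := fX F n r).
  assert (Hz : (fun y => exists a b (pr : Riemann_integrable f a b), 0 < a /\ a <= b /\ b < 1 /\ y = RiemannInt pr)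
                 (RiemannInt (RiemannInt_P7 f (1/2)))).
  { exists (1/2), (1/2), (RiemannInt_P7 f (1/2)). repeat split; lra. }
  split.
  - unfold int01. rewrite <- (RiemannInt_P9 (RiemannInt_P7 f (1/2))) at 1.
    apply (Rsup_ge _ _ B Hz). intros y (a & b & pr & H1 & H2 & H3 & ->). apply H; auto.
  - unfold int01. apply Rsup_le. eexists; exact Hz. intros y (a & b & pr & H1 & H2 & H3 & ->). apply H; auto.
Qed.

Lemma fX_ge0 t : 0 <= fX F n r t.
Proof. apply rpow_ge0. Qed.

Lemma piece_mid (g : nat -> R) i : (i < n)%nat ->
  (forall u, INR i / INR n < u < INR (S i) / INR n -> g i <= quant F u <= g (S i)) ->
  forall a b (pr : Riemann_integrable (fX F n r) a b),
  INR i / INR n <= a -> a <= b -> b <= INR (S i) / INR n ->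
  RiemannInt pr <= rpow (g (S i) - g i) r / INR n.
Proof.
  intros Hi Hg a b pr Ha Hab Hb.
  pose proof (RiemannInt_const_bound (f := fX F n r) (a := a) (b := b) (l := 0) (u := rpow (g (S i) - g i) r) pr Hab) as Hc.
  pose proof (rpow_ge0 (g (S i) - g i) r) as Hp.
  assert (Hlen : b - a <= 1 / INR n).
  { rewrite S_INR in Hb. assert ((INR i + 1) / INR n = INR i / INR n + 1 / INR n) by (field; pose proof Hnr; lra). lra. }
  assert (RiemannInt pr <= rpow (g (S i) - g i) r * (b - a)).
  { apply Hc. intros x Hx. split. apply fX_ge0. rewrite (fX_piece i x Hi) by lra.
    apply rpow_le; [lra|]. split. apply Rabs_pos.
    pose proof (Hg x ltac:(lra)). pose proof (Hg (cpt n i) (cpt_in n i Hi)).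
    apply Rabs_le; lra. }
  assert (rpow (g (S i) - g i) r * (b - a) <= rpow (g (S i) - g i) r * (1 / INR n)) by (apply Rmult_le_compat_l; lra).
  unfold Rdiv at 1. lra.
Qed.

End Main.

Lemma Rdiv_le_0_compat a b : 0 <= a -> 0 < b -> 0 <= a / b.
Proof. intros; unfold Rdiv; apply Rmult_le_pos; auto. left; apply Rinv_0_lt_compat; auto. Qed.

Lemma no_supp_const F : is_cdf F -> forall u v, u <= v ->
  (forall z, u <= z <= v -> ~ in_supp F z) -> F v <= F u.
Proof.
  intros HF u v Huv Hns.
  set (A := fun z => u <= z <= v /\ F z <= F u).
  assert (HA : is_lub A (Rsup A)).
  { apply Rsup_lub. exists v; intros z Hz; apply Hz. exists u; split; [lra|lra]. }
  set (s := Rsup A) in *.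
  assert (Hus : u <= s) by (apply HA; split; lra).
  assert (Hsv : s <= v) by (apply HA; intros z Hz; apply Hz).
  pose proof (Hns s ltac:(lra)) as Hn. unfold in_supp in Hn.
  apply not_all_ex_not in Hn. destruct Hn as [e He].
  apply imply_to_and in He. destruct He as [He Hne]. apply Rnot_lt_le in Hne.
  assert (H1 : F (s - e) <= F u).
  { destruct (Rle_dec (s - e) u). apply (F_mono F HF); auto.
    destruct (classic (exists z, A z /\ s - e < z)) as [[z [Az Hz]]|Hno].
    - apply Rle_trans with (F z). apply (F_mono F HF); lra. apply Az.
    - exfalso. assert (s <= s - e); [|lra]. apply HA. intros z Az.
      destruct (Rle_dec z (s - e)); auto. exfalso; apply Hno; exists z; split; auto; lra. }
  destruct (Rle_dec v (s + e)) as [Hv|Hv].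
  - apply Rle_trans with (F (s + e)). apply (F_mono F HF); auto. lra.
  - exfalso. assert (s + e <= s); [|lra]. apply HA. split; [lra|lra].
Qed.

Lemma quant_bounded F : is_cdf F -> supp_bounded F ->
  exists M, 0 < M /\ forall t, 0 < t < 1 -> - M <= quant F t <= M.
Proof.
  intros HF [M0 HM0]. exists (Rabs M0 + 1). split. pose proof (Rabs_pos M0); lra.
  intros t Ht. pose proof (Rle_abs M0). split.
  -
    set (x := - (Rabs M0 + 1)).
    destruct HF as (H1 & H2 & H3 & H4) eqn:EHF.
    destruct (H3 t) as [My HMy]; [lra|].
    set (y := Rmin My x).
    assert (Fy : F y < t) by (specialize (HMy y (Rmin_l _ _)); apply Rabs_def2 in HMy; lra).
    assert (F x <= F y).
    { apply (no_supp_const F HF). apply Rmin_r. intros z Hz Hs. specialize (HM0 z Hs).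
      assert (-z <= Rabs z) by (rewrite <- Rabs_Ropp; apply Rle_abs). pose proof (Rle_abs z). unfold x in Hz. lra. }
    fold x. apply quant_ge; auto. lra.
  - set (x := Rabs M0 + 1).
    destruct HF as (H1 & H2 & H3 & H4) eqn:EHF.
    destruct (H4 (1 - t)) as [My HMy]; [lra|].
    set (y := Rmax My x).
    assert (Fy : t < F y) by (specialize (HMy y (Rmax_l _ _)); apply Rabs_def2 in HMy; lra).
    assert (F y <= F x).
    { apply (no_supp_const F HF). apply Rmax_r. intros z Hz Hs. specialize (HM0 z Hs).
      assert (-z <= Rabs z) by (rewrite <- Rabs_Ropp; apply Rle_abs). pose proof (Rle_abs z). unfold x in Hz. lra. }
    destruct (quant_lub F HF t Ht) as [_ Hl]. apply Hl. intros z Hz.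
    destruct (Rle_dec z x) as [|Hzx]; auto. exfalso.
    assert (F x <= F z) by (apply (F_mono F HF); lra). lra.
Qed.

Lemma Rpower_cancel c n r : 0 < c -> 0 < n -> 0 < r ->
  Rpower n (1 / r) * Rpower (Rpower c r / n) (1 / r) = c.
Proof.
  intros Hc Hn Hr. unfold Rpower. change (exp (r * ln c) / n) with (exp (r * ln c) * / n).
  rewrite ln_mult by (try apply exp_pos; apply Rinv_0_lt_compat; auto).
  rewrite ln_Rinv by auto. rewrite ln_exp. rewrite <- exp_plus.
  replace (1 / r * ln n + 1 / r * (r * ln c + - ln n)) with (ln c) by (field; lra).
  apply exp_ln; auto.
Qed.

Theorem part_ii F r : 1 <= r -> is_cdf F -> supp_bounded F ->
  exists M N, forall n : nat, (N <= n)%nat -> (1 <= n)%nat ->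
    Rpower (INR n) (1 / r) * dr_best n r F <= M.
Proof.
  intros Hr HF Hsb. destruct (quant_bounded F HF Hsb) as [M0 [HM0 HQ]].
  exists (2 * M0), 1%nat. intros n _ Hn1.
  assert (Hn : (0 < n)%nat) by lia.
  assert (Hnr : 0 < INR n) by (apply lt_0_INR; lia).
  set (g := fun k => if Nat.eqb k 0 then - M0 else if Nat.eqb k n then M0 else quant F (INR k / INR n)).
  assert (Hg : forall i, (i < n)%nat -> forall u, INR i / INR n < u < INR (S i) / INR n ->
                 g i <= quant F u <= g (S i)).
  { intros i Hi u Hu. pose proof (grid_01 n i ltac:(lia) Hn). pose proof (grid_01 n (S i) ltac:(lia) Hn).
    assert (Hu01 : 0 < u < 1) by lra. split.
    - unfold g. destruct (Nat.eqb_spec i 0). apply HQ; auto.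
      destruct (Nat.eqb_spec i n); [lia|].
      apply quant_mono; auto; try lra.
      assert (0 < INR i) by (apply lt_0_INR; lia). unfold Rdiv; apply Rmult_lt_0_compat; auto.
      apply Rinv_0_lt_compat; auto.
    - unfold g. destruct (Nat.eqb_spec (S i) 0); [lia|].
      destruct (Nat.eqb_spec (S i) n). apply HQ; auto.
      apply quant_mono; auto; try lra.
      assert (INR (S i) < INR n) by (apply lt_INR; lia).
      apply Rmult_lt_reg_r with (INR n); auto. unfold Rdiv. rewrite Rmult_assoc, Rinv_l; lra. }
  assert (Hgm : forall i, (i < n)%nat -> g i <= g (S i)).
  { intros i Hi. pose proof (Hg i Hi (cpt n i) (cpt_in n i Hi)). lra. }
  set (B := fun i => rpow (g (S i) - g i) r / INR n).
  assert (Hint : forall a b (pr : Riemann_integrable (fX F n r) a b), 0 < a -> a <= b -> b < 1 ->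
            RiemannInt pr <= Rpower (2 * M0) r / INR n).
  { intros a b pr Ha Hab Hb.
    eapply Rle_trans. apply (split_bound (fX F n r) n Hn B).
    - intros i; unfold B. apply Rdiv_le_0_compat; auto. apply rpow_ge0.
    - intros i a' b' pr' Hi H1 H2 H3 _ _. apply (piece_mid F HF r Hr n Hn g i Hi (Hg i Hi)); auto.
    - auto. - auto. - auto.
    - unfold B. rewrite sumB_div. unfold Rdiv. apply Rmult_le_compat_r.
      left; apply Rinv_0_lt_compat; auto.
      eapply Rle_trans. apply grid_sum; auto.
      unfold g. rewrite Nat.eqb_refl. simpl. destruct (Nat.eqb_spec n 0); [lia|].
      rewrite rpow_pos by lra. right; f_equal; ring. }
  assert (HB0 : 0 <= Rpower (2 * M0) r / INR n).
  { apply Rdiv_le_0_compat; auto. left; apply Rpower_pos. }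
  destruct (dr_best_bound F HF r Hr n Hn _ HB0 Hint) as [_ Hd].
  rewrite rpow_pos in Hd by (apply Rdiv_lt_0_compat; auto; apply Rpower_pos).
  assert (Hp : 0 < Rpower (INR n) (1 / r)) by apply Rpower_pos.
  apply Rle_trans with (Rpower (INR n) (1 / r) * Rpower (Rpower (2 * M0) r / INR n) (1 / r)).
  apply Rmult_le_compat_l; lra.
  rewrite Rpower_cancel; lra.
Qed.

Lemma id1 e n s r : 0 < e -> 0 < n -> 0 < s ->
  Rpower (e * Rpower n (1 / s)) r / n = Rpower e r * Rpower n (r / s - 1).
Proof.
  intros He Hn Hs. unfold Rpower. rewrite ln_mult by (auto; apply exp_pos). rewrite ln_exp.
  pattern n at 2. rewrite <- (exp_ln n) by auto. unfold Rdiv at 1. rewrite <- exp_Ropp, <- !exp_plus.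
  f_equal. field. lra.
Qed.

Lemma id2 e n s r : 0 < e -> 0 < n -> 0 < s ->
  Rpower (e * Rpower n (1 / s)) (r - s) * Rpower e s = Rpower e r * Rpower n (r / s - 1).
Proof.
  intros He Hn Hs. unfold Rpower. rewrite ln_mult by (auto; apply exp_pos). rewrite ln_exp.
  rewrite <- !exp_plus. f_equal. field. lra.
Qed.

Lemma id3 x r : 0 < x -> Rpower (2 * x) r = Rpower 2 r * Rpower x r.
Proof. intros Hx. rewrite Rpower_mult_distr; auto; lra. Qed.

Lemma id4 e n r s : 0 < e -> 0 < n -> 0 < r -> 0 < s ->
  Rpower n (1 / r - 1 / s) * Rpower (7 * Rpower (2 * e) r * Rpower n (r / s - 1)) (1 / r)
  = Rpower 7 (1 / r) * (2 * e).
Proof.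
  intros He Hn Hr Hs. unfold Rpower.
  rewrite !ln_mult by (try lra; try apply exp_pos; apply Rmult_lt_0_compat; try lra; apply exp_pos). rewrite !ln_exp.
  rewrite <- !exp_plus. replace (2 * e) with (exp (ln 2 + ln e)) by (rewrite <- ln_mult by lra; apply exp_ln; lra). rewrite <- exp_plus.
  f_equal. field. lra.
Qed.

Section PartI.
Variable F : R -> R.
Hypothesis HF : is_cdf F.
Variables r s : R.
Hypothesis Hr : 1 <= r.
Hypothesis Hrs : r < s.
Variable n : nat.
Hypothesis Hn : (3 <= n)%nat.

Let Q := quant F.
Let G := fun t => rpow (Rabs (quant F t)) s.

Lemma HQm : monoQ Q.
Proof. intros x y Hx Hxy Hy. apply quant_mono; auto; lra. Qed.

Lemma Hn0 : (0 < n)%nat. Proof. lia. Qed.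
Lemma Hnr' : 0 < INR n. Proof. apply lt_0_INR; lia. Qed.

Lemma end_piece c L tau a b (pr : Riemann_integrable (fX F n r) a b) (prG : Riemann_integrable G a b) :
  0 < L -> Rabs (Q c) <= L -> a <= b -> b - a <= 1 / INR n ->
  (forall t, a < t < b -> fX F n r t = rpow (Rabs (Q c - Q t)) r) ->
  RiemannInt prG <= tau ->
  RiemannInt pr <= Rpower 2 r * (2 * Rpower L r / INR n + Rpower L (r - s) * tau).
Proof.
  intros HL Hc Hab Hlen Hf HG.
  set (K1 := Rpower 2 r * Rpower L (r - s)).
  set (K2 := Rpower 2 r * (2 * Rpower L r)).
  assert (prH : Riemann_integrable (fun t => fct_cte K2 t + K1 * G t) a b).
  { apply RiemannInt_P10. apply RiemannInt_P14. exact prG. }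
  assert (Hpw : forall t, a < t < b -> fX F n r t <= fct_cte K2 t + K1 * G t).
  { intros t Ht. rewrite Hf by auto. unfold fct_cte, K1, K2, G.
    fold (Q t).
    set (m := Rmax (Rabs (Q c)) (Rabs (Q t))).
    assert (Hm0 : 0 <= m) by (unfold m; apply Rle_trans with (Rabs (Q c)); [apply Rabs_pos|apply Rmax_l]).
    assert (Hd : Rabs (Q c - Q t) <= 2 * m).
    { unfold Rminus. eapply Rle_trans. apply Rabs_triang. rewrite Rabs_Ropp.
      pose proof (Rmax_l (Rabs (Q c)) (Rabs (Q t))). pose proof (Rmax_r (Rabs (Q c)) (Rabs (Q t))). fold m in H, H0. lra. }
    eapply Rle_trans. apply rpow_le. lra. split. apply Rabs_pos. exact Hd.
    rewrite rpow_mul by lra.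
    assert (Hmr : rpow m r <= rpow (Rabs (Q c)) r + rpow (Rabs (Q t)) r).
    { unfold m, Rmax. destruct (Rle_dec (Rabs (Q c)) (Rabs (Q t))).
      pose proof (rpow_ge0 (Rabs (Q c)) r); lra. pose proof (rpow_ge0 (Rabs (Q t)) r); lra. }
    assert (H1 : rpow (Rabs (Q c)) r <= Rpower L r).
    { rewrite <- (rpow_pos L r) by lra. apply rpow_le; [lra|]. split; [apply Rabs_pos|auto]. }
    pose proof (thresh (Rabs (Q t)) L r s (Rabs_pos _) HL ltac:(lra) ltac:(lra)) as H2.
    pose proof (Rpower_pos 2 r).
    assert (rpow m r <= 2 * Rpower L r + Rpower L (r - s) * rpow (Rabs (Q t)) s).
    { pose proof (Rpower_pos L r). lra. }
    unfold Q in *. nra. }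
  pose proof (RiemannInt_P19 pr prH Hab Hpw) as H1.
  rewrite (RiemannInt_P13 (RiemannInt_P14 a b K2) prG prH), RiemannInt_P15 in H1.
  assert (HK1 : 0 <= K1) by (unfold K1; pose proof (Rpower_pos 2 r); pose proof (Rpower_pos L (r - s)); nra).
  assert (HK2 : 0 <= K2) by (unfold K2; pose proof (Rpower_pos 2 r); pose proof (Rpower_pos L r); nra).
  assert (K2 * (b - a) <= K2 * (1 / INR n)) by (apply Rmult_le_compat_l; lra).
  assert (K1 * RiemannInt prG <= K1 * tau) by (apply Rmult_le_compat_l; lra).
  unfold K1, K2 in *.
  replace (Rpower 2 r * (2 * Rpower L r / INR n + Rpower L (r - s) * tau))
    with (Rpower 2 r * (2 * Rpower L r) * (1 / INR n) + Rpower 2 r * Rpower L (r - s) * tau)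
    by (field; pose proof Hnr'; lra).
  lra.
Qed.


Lemma arg01 j : (1 <= j <= n - 1)%nat -> 0 < INR j / INR n < 1.
Proof.
  intros Hj. pose proof Hnr'. assert (0 < INR j) by (apply lt_0_INR; lia).
  assert (INR j < INR n) by (apply lt_INR; lia). split.
  apply Rdiv_lt_0_compat; auto.
  apply Rmult_lt_reg_r with (INR n); auto. unfold Rdiv. rewrite Rmult_assoc, Rinv_l; lra.
Qed.

Lemma core eta : 0 < eta ->
  let L := eta * Rpower (INR n) (1 / s) in
  Rabs (Q (INR 1 / INR n)) <= L -> Rabs (Q (INR (n - 1) / INR n)) <= L ->
  Rabs (Q (cpt n 0)) <= L -> Rabs (Q (cpt n (n - 1))) <= L ->
  (forall a b (prG : Riemann_integrable G a b), 0 < a -> a <= b -> b <= 1 / INR n -> RiemannInt prG <= Rpower eta s) ->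
  (forall a b (prG : Riemann_integrable G a b), INR (n - 1) / INR n <= a -> a <= b -> b < 1 -> RiemannInt prG <= Rpower eta s) ->
  forall a b (pr : Riemann_integrable (fX F n r) a b), 0 < a -> a <= b -> b < 1 ->
  RiemannInt pr <= 7 * Rpower (2 * eta) r * Rpower (INR n) (r / s - 1).
Proof.
  intros Heta L Hq1 Hq2 Hq3 Hq4 Ht1 Ht2 a b pr Ha Hab Hb.
  pose proof Hnr' as Hnr.
  assert (HL : 0 < L) by (unfold L; pose proof (Rpower_pos (INR n) (1 / s)); nra).
  set (g := fun k => Q (INR (Nat.max 1 (Nat.min k (n - 1))) / INR n)).
  assert (Hgm : forall i, g i <= g (S i)).
  { intros i. unfold g. apply HQm.
    - apply arg01; lia.
    - unfold Rdiv. apply Rmult_le_compat_r. left; apply Rinv_0_lt_compat; auto. apply le_INR; lia.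
    - apply arg01; lia. }
  set (B0 := Rpower 2 r * (2 * Rpower L r / INR n + Rpower L (r - s) * Rpower eta s)).
  assert (HB0 : 0 <= B0).
  { unfold B0. pose proof (Rpower_pos 2 r). pose proof (Rpower_pos L r).
    pose proof (Rpower_pos L (r - s)). pose proof (Rpower_pos eta s).
    apply Rmult_le_pos; [lra|]. apply Rplus_le_le_0_compat; [apply Rdiv_le_0_compat; lra|nra]. }
  set (B := fun i => rpow (g (S i) - g i) r / INR n + (if Nat.eqb i 0 then B0 else 0)
                      + (if Nat.eqb i (n - 1) then B0 else 0)).
  assert (HB : forall i, 0 <= B i).
  { intros i. unfold B. assert (0 <= rpow (g (S i) - g i) r / INR n) by (apply Rdiv_le_0_compat; auto; apply rpow_ge0).
    destruct (Nat.eqb i 0); destruct (Nat.eqb i (n - 1)); lra. }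
  eapply Rle_trans. apply (split_bound (fX F n r) n Hn0 B HB); auto.
  - intros i a' b' pr' Hi H1 H2 H3 Ha' Hb'.
    assert (prG : Riemann_integrable G a' b') by (apply (G_int Q s HQm); lra).
    assert (Hfirst : 0 <= rpow (g (S i) - g i) r / INR n) by (apply Rdiv_le_0_compat; auto; apply rpow_ge0).
    destruct (Nat.eqb_spec i 0) as [Hi0|Hi0].
    + subst i. change (INR 1) with 1 in H3.
      assert (Hpc : RiemannInt pr' <= B0).
      { apply (end_piece (cpt n 0) L (Rpower eta s) a' b' pr' prG HL Hq3 H2).
        - change (INR 0) with 0 in H1. unfold Rdiv in H1. rewrite Rmult_0_l in H1. lra.
        - intros t Ht. apply (fX_piece F HF r n Hn0 0%nat t Hi).
          change (INR 1) with 1; change (INR 0) with 0. unfold Rdiv at 1; rewrite Rmult_0_l. lra.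
        - apply Ht1; auto. }
      unfold B. rewrite Nat.eqb_refl. destruct (Nat.eqb 0 (n - 1)); lra.
    + destruct (Nat.eqb_spec i (n - 1)) as [Hin|Hin].
      * assert (HSi : S i = n) by lia.
        rewrite HSi in H3. replace (INR n / INR n) with 1 in H3 by (field; lra).
        assert (Hpc : RiemannInt pr' <= B0).
        { apply (end_piece (cpt n i) L (Rpower eta s) a' b' pr' prG HL ltac:(rewrite Hin; auto) H2).
          - rewrite Hin in H1. rewrite minus_INR in H1 by lia.
            assert ((INR n - INR 1) / INR n = 1 - 1 / INR n) by (simpl; field; lra). lra.
          - intros t Ht. apply (fX_piece F HF r n Hn0 i t Hi). rewrite HSi. replace (INR n / INR n) with 1 by (field; lra). lra.
          - apply Ht2; auto. rewrite <- Hin; auto. }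
        unfold B. destruct (Nat.eqb_spec i 0); [lia|]. rewrite Hin, Nat.eqb_refl. rewrite <- Hin. lra.
      * assert (Hmid : RiemannInt pr' <= rpow (g (S i) - g i) r / INR n).
        { apply (piece_mid F HF r Hr n Hn0 g i Hi); auto.
          intros u Hu. unfold g.
          replace (Nat.max 1 (Nat.min i (n - 1))) with i by lia.
          replace (Nat.max 1 (Nat.min (S i) (n - 1))) with (S i) by lia.
          pose proof (arg01 i ltac:(lia)). pose proof (arg01 (S i) ltac:(lia)).
          split; apply HQm; lra. }
        unfold B. destruct (Nat.eqb_spec i 0); [lia|]. destruct (Nat.eqb_spec i (n - 1)); [lia|]. lra.
  - unfold B. rewrite !sumB_plus, !sumB_ind, sumB_div.
    destruct (Nat.ltb_spec 0 n); [|lia]. destruct (Nat.ltb_spec (n - 1) n); [|lia].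
    assert (Hs1 : sumB (fun i => rpow (g (S i) - g i) r) n <= Rpower (2 * L) r).
    { eapply Rle_trans. apply grid_sum; auto.
      rewrite <- (rpow_pos (2 * L)) by lra. apply rpow_le; [lra|].
      unfold g. replace (Nat.max 1 (Nat.min n (n - 1))) with (n - 1)%nat by lia.
      replace (Nat.max 1 (Nat.min 0 (n - 1))) with 1%nat by lia.
      assert (Hmono : forall k, g 0%nat <= g k). { induction k; [lra|]. specialize (Hgm k). lra. }
      specialize (Hmono n). unfold g in Hmono.
      replace (Nat.max 1 (Nat.min n (n - 1))) with (n - 1)%nat in Hmono by lia.
      replace (Nat.max 1 (Nat.min 0 (n - 1))) with 1%nat in Hmono by lia.
      split; [lra|].
      assert (Hx1 := Rle_abs (Q (INR (n - 1) / INR n))).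
      assert (Hx2 : - Q (INR 1 / INR n) <= Rabs (Q (INR 1 / INR n))) by (rewrite <- Rabs_Ropp; apply Rle_abs).
      lra. }
    assert (E1 : Rpower L r / INR n = Rpower eta r * Rpower (INR n) (r / s - 1)) by (apply id1; lra).
    assert (E2 : Rpower L (r - s) * Rpower eta s = Rpower eta r * Rpower (INR n) (r / s - 1)) by (apply id2; lra).
    assert (E3 : Rpower (2 * L) r = Rpower 2 r * Rpower L r) by (apply id3; lra).
    assert (E4 : Rpower (2 * eta) r = Rpower 2 r * Rpower eta r) by (apply id3; lra).
    assert (Hd : sumB (fun i => rpow (g (S i) - g i) r) n / INR n <= Rpower (2 * L) r / INR n).
    { unfold Rdiv. apply Rmult_le_compat_r; auto. left; apply Rinv_0_lt_compat; auto. }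
    assert (E5 : Rpower (2 * L) r / INR n = Rpower 2 r * (Rpower L r / INR n)) by (rewrite E3; field; lra).
    assert (E6 : B0 = Rpower 2 r * (2 * (Rpower L r / INR n) + Rpower L (r - s) * Rpower eta s)) by (unfold B0; field; lra).
    rewrite E1, E2 in E6. rewrite E1 in E5. rewrite E4. lra.
Qed.

End PartI.

Lemma Ls_id e n s : 0 < e -> 0 < n -> 0 < s -> Rpower (e * Rpower n (1 / s)) s = Rpower e s * n.
Proof.
  intros He Hn Hs. unfold Rpower. rewrite ln_mult by (auto; apply exp_pos). rewrite ln_exp.
  transitivity (exp (s * ln e) * exp (ln n)). rewrite <- exp_plus; f_equal; field; lra.
  rewrite exp_ln; auto.
Qed.

Lemma mono_refl F : is_cdf F -> monoQ (fun t => - quant F (1 - t)).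
Proof. intros HF x y Hx Hxy Hy. apply Ropp_le_contravar. apply quant_mono; auto; lra. Qed.

Lemma refl_eq F s a b
  (pr : Riemann_integrable (fun t => rpow (Rabs (- quant F (1 - t))) s) a b)
  (prG : Riemann_integrable (fun t => rpow (Rabs (quant F t)) s) (1 - b) (1 - a)) :
  a <= b -> RiemannInt pr = RiemannInt prG.
Proof.
  intros Hab.
  assert (pr2 : Riemann_integrable (fun t => (fun t => rpow (Rabs (quant F t)) s) (1 - t)) a b).
  { replace (fun t => (fun t => rpow (Rabs (quant F t)) s) (1 - t)) with
      (fun t => rpow (Rabs (- quant F (1 - t))) s). exact pr.
    apply functional_extensionality; intros t. rewrite Rabs_Ropp. reflexivity. }
  rewrite (RiemannInt_P18 pr pr2 Hab).
  2: { intros t _. rewrite Rabs_Ropp. reflexivity. }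
  exact (RI_reflect (fun t => rpow (Rabs (quant F t)) s) a b (1 - b) (1 - a) prG pr2 eq_refl eq_refl).
Qed.

Lemma refl_eq' F s a b a2 b2
  (pr : Riemann_integrable (fun t => rpow (Rabs (- quant F (1 - t))) s) a b)
  (prG : Riemann_integrable (fun t => rpow (Rabs (quant F t)) s) a2 b2) :
  a <= b -> a2 = 1 - b -> b2 = 1 - a -> RiemannInt pr = RiemannInt prG.
Proof. intros Hab -> ->. apply refl_eq; auto. Qed.

Theorem part_i F r : 1 <= r -> is_cdf F -> forall s : R, r < s -> has_moment F s ->
  Un_cv (fun k => Rpower (INR (S k)) (1 / r - 1 / s) * dr_best (S k) r F) 0.
Proof.
  intros Hr HF s Hrs Hmom eps Heps.
  assert (Hs : 0 < s) by lra.
  assert (HQ : monoQ (quant F)) by (intros x y Hx Hxy Hy; apply quant_mono; auto; lra).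
  pose proof (mono_refl F HF) as HQ'.
  assert (Hmom' : exists M, forall a b (pr : Riemann_integrable (fun t => rpow (Rabs (- quant F (1 - t))) s) a b),
             0 < a -> a <= b -> b < 1 -> RiemannInt pr <= M).
  { destruct Hmom as [M HM]. exists M. intros a b pr Ha Hab Hb.
    assert (prG : Riemann_integrable (fun t => rpow (Rabs (quant F t)) s) (1 - b) (1 - a))
      by (apply (G_int (quant F) s HQ); lra).
    rewrite (refl_eq F s a b pr prG Hab). apply HM; lra. }
  set (eta := eps / 32).
  assert (Heta : 0 < eta) by (unfold eta; lra).
  set (e := Rpower eta s / 2).
  assert (He : 0 < e) by (unfold e; pose proof (Rpower_pos eta s); lra).
  destruct (point0 (quant F) s HQ Hs Hmom e He) as [d1 [Hd1 Hp1]].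
  destruct (point0 _ s HQ' Hs Hmom' e He) as [d2 [Hd2 Hp2]].
  destruct (tail0 (quant F) s HQ Hs Hmom (Rpower eta s) (Rpower_pos _ _)) as [d3 [Hd3 Ht3]].
  destruct (tail0 _ s HQ' Hs Hmom' (Rpower eta s) (Rpower_pos _ _)) as [d4 [Hd4 Ht4]].
  set (d := Rmin (Rmin d1 d2) (Rmin d3 d4)).
  assert (Hdd : d <= d1 /\ d <= d2 /\ d <= d3 /\ d <= d4).
  { unfold d. pose proof (Rmin_l (Rmin d1 d2) (Rmin d3 d4)). pose proof (Rmin_r (Rmin d1 d2) (Rmin d3 d4)).
    pose proof (Rmin_l d1 d2). pose proof (Rmin_r d1 d2). pose proof (Rmin_l d3 d4). pose proof (Rmin_r d3 d4). lra. }
  assert (Hd : 0 < d) by (unfold d; repeat apply Rmin_glb_lt; lra).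
  destruct (archimed_cor1 d Hd) as [N0 [HN0 HN0p]].
  exists (N0 + 3)%nat. intros k Hk.
  set (n := S k).
  assert (Hn3 : (3 <= n)%nat) by (unfold n; lia).
  assert (Hn0 : (0 < n)%nat) by lia.
  assert (Hnr : 0 < INR n) by (apply lt_0_INR; lia).
  assert (Hinv : 1 / INR n < d).
  { apply Rle_lt_trans with (/ INR N0); auto. unfold Rdiv; rewrite Rmult_1_l.
    apply Rinv_le_contravar. apply lt_0_INR; auto. apply le_INR; unfold n; lia. }
  assert (Hinv0 : 0 < 1 / INR n) by (apply Rdiv_lt_0_compat; lra).
  set (L := eta * Rpower (INR n) (1 / s)).
  assert (HL : 0 < L) by (unfold L; pose proof (Rpower_pos (INR n) (1 / s)); nra).
  assert (HLs : Rpower L s = Rpower eta s * INR n) by (unfold L; apply Ls_id; auto).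
  assert (Hconv : forall A t, 0 < t -> 1 / (2 * INR n) <= t -> t * rpow (Rabs A) s <= e -> Rabs A <= L).
  { intros A t Ht Ht2 H. apply (rpow_inv_le (Rabs A) L s Hs (Rabs_pos _) HL). rewrite HLs.
    assert (rpow (Rabs A) s <= e / t).
    { apply Rmult_le_reg_l with t; auto. unfold Rdiv. rewrite <- Rmult_assoc, (Rmult_comm t e), Rmult_assoc, Rinv_r, Rmult_1_r; lra. }
    assert (e / t <= e * (2 * INR n)).
    { unfold Rdiv. apply Rmult_le_compat_l; [lra|].
      replace (2 * INR n) with (/ (1 / (2 * INR n))) by (field; lra).
      apply Rinv_le_contravar; auto. apply Rdiv_lt_0_compat; lra. }
    assert (e * (2 * INR n) = Rpower eta s * INR n) by (unfold e; field). lra. }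
  assert (Hc0 : cpt n 0 = 1 / (2 * INR n)) by (unfold cpt; change (INR 0) with 0; field; lra).
  assert (Hcn : cpt n (n - 1) = 1 - 1 / (2 * INR n)) by (unfold cpt; rewrite minus_INR by lia; change (INR 1) with 1; field; lra).
  assert (Hn1 : INR (n - 1) / INR n = 1 - 1 / INR n) by (rewrite minus_INR by lia; change (INR 1) with 1; field; lra).
  assert (Hhalf : 1 / (2 * INR n) <= 1 / INR n) by (unfold Rdiv; apply Rmult_le_compat_l; [lra|]; apply Rinv_le_contravar; lra).
  assert (Hhalf0 : 0 < 1 / (2 * INR n)) by (apply Rdiv_lt_0_compat; lra).
  assert (Hint : forall a b (pr : Riemann_integrable (fX F n r) a b), 0 < a -> a <= b -> b < 1 ->
             RiemannInt pr <= 7 * Rpower (2 * eta) r * Rpower (INR n) (r / s - 1)).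
  { apply (core F HF r s Hr Hrs n Hn3 eta Heta).
    - apply Hconv with (1 / INR n); try lra. change (INR 1) with 1. apply Hp1; lra.
    - rewrite Hn1. apply Hconv with (1 / INR n); try lra.
      pose proof (Hp2 (1 / INR n) ltac:(lra)) as H. rewrite Rabs_Ropp in H. exact H.
    - rewrite Hc0. apply Hconv with (1 / (2 * INR n)); try lra. apply Hp1; lra.
    - rewrite Hcn. apply Hconv with (1 / (2 * INR n)); try lra.
      pose proof (Hp2 (1 / (2 * INR n)) ltac:(lra)) as H. rewrite Rabs_Ropp in H.
      replace (1 - (1 - 1 / (2 * INR n))) with (1 / (2 * INR n)) by ring. exact H.
    - intros a b prG Ha Hab Hb. apply Ht3; auto; lra.
    - intros a b prG Ha Hab Hb. rewrite Hn1 in Ha.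
      assert (pr' : Riemann_integrable (fun t => rpow (Rabs (- quant F (1 - t))) s) (1 - b) (1 - a))
        by (apply (G_int _ s HQ'); lra).
      rewrite <- (refl_eq' F s (1 - b) (1 - a) a b pr' prG ltac:(lra) ltac:(ring) ltac:(ring)).
      apply Ht4; lra. }
  set (Bn := 7 * Rpower (2 * eta) r * Rpower (INR n) (r / s - 1)).
  assert (HBn : 0 < Bn).
  { unfold Bn. pose proof (Rpower_pos (2 * eta) r). pose proof (Rpower_pos (INR n) (r / s - 1)).
    apply Rmult_lt_0_compat; [|auto]. lra. }
  destruct (dr_best_bound F HF r Hr n Hn0 Bn (Rlt_le _ _ HBn) Hint) as [Hdr0 Hdr1].
  rewrite rpow_pos in Hdr1 by auto.
  pose proof (Rpower_pos (INR n) (1 / r - 1 / s)) as Hpw.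
  assert (Hu : Rpower (INR n) (1 / r - 1 / s) * dr_best n r F <= Rpower 7 (1 / r) * (2 * eta)).
  { rewrite <- (id4 eta (INR n) r s) by lra. fold Bn. apply Rmult_le_compat_l; lra. }
  assert (H7 : Rpower 7 (1 / r) <= 7).
  { rewrite <- (Rpower_1 7) at 2 by lra. apply Rle_Rpower; [lra|].
    unfold Rdiv. rewrite Rmult_1_l. rewrite <- Rinv_1. apply Rinv_le_contravar; lra. }
  assert (Hu0 : 0 <= Rpower (INR n) (1 / r - 1 / s) * dr_best n r F) by (apply Rmult_le_pos; lra).
  unfold Rdist. rewrite Rminus_0_r, Rabs_right by lra.
  assert (Rpower 7 (1 / r) * (2 * eta) <= 7 * (2 * eta)) by (apply Rmult_le_compat_r; lra).
  unfold eta in *. lra.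
Qed.


Theorem theorem5p8 (r : R) (F : R -> R) :
  1 <= r -> is_cdf F -> has_moment F r ->
  (forall s : R, r < s -> has_moment F s ->
     Un_cv (fun k => Rpower (INR (S k)) (1 / r - 1 / s) * dr_best (S k) r F) 0) /\
  (supp_bounded F ->
     exists M N, forall n : nat, (N <= n)%nat -> (1 <= n)%nat ->
       Rpower (INR n) (1 / r) * dr_best n r F <= M).
Proof.
  intros Hr HF _. split.
  - intros s Hrs Hm. apply part_i; auto.
  - intros Hsb. apply part_ii; auto.
Qed.
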